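(* There is at most one prime $p$ such that the set of boards $\{G_{p,n}: n\ge 1\}$ contains infinitely many boards of outcome class $V$.
   Context: Domineering is a two-player game played on a rectangular grid of unit squares. The players alternate placing dominoes, each covering two adjacent unoccupied squares; the player Vertical must place dominoes vertically (covering two squares in the same column), and the player Horizontal must place them horizontally (covering two squares in the same row). A player with no legal move on her turn loses. $G_{m,n}$ denotes the empty board with vertical dimension $m$ (number of rows) and horizontal dimension $n$ (number of columns). Every position has one of four outcome classes under optimal play: $V$ (Vertical wins whoever moves first), $H$ (Horizontal wins whoever moves first), $1$ (the player who moves first wins), $2$ (the player who moves second wins). *)

(* Defs.v *)
From mathcomp Require Import all_boot.
Set Implicit Arguments. Unset Strict Implicit. Unset Printing Implicit Defensive.

(* A position is the (duplicate-free) list of its unoccupied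
   cells; a cell is (row, column).  Player [true] = Vertical (covers
   (r,c),(r+1,c)), player [false] = Horizontal (covers (r,c),(r,c+1)). *)

Definition cell := (nat * nat)%type.

Definition partner (vert : bool) (x : cell) : cell :=
  if vert then (x.1.+1, x.2) else (x.1, x.2.+1).

Definition play (vert : bool) (x : cell) (s : seq cell) : seq cell :=
  [seq z <- s | (z != x) && (z != partner vert x)].

(* [wins k vert s]: the player [vert], about to move in position [s], has a
   winning strategy (normal play: a player with no legal move loses),
   computed with recursion depth [k]. Each move removes two cells, so depth
   [size s] suffices (see [mover_wins]). *)
Fixpoint wins (k : nat) (vert : bool) (s : seq cell) : bool :=
  match k with
  | 0 => false
  | k'.+1 => has (fun x => (partner vert x \in s) &&
                           ~~ wins k' (~~ vert) (play vert x s)) s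
  end.

Definition mover_wins (vert : bool) (s : seq cell) : bool :=
  wins (size s) vert s.

Definition board (m n : nat) : seq cell :=
  [seq (r, c) | r <- iota 0 m, c <- iota 0 n].

Inductive outcome := OutV | OutH | Out1 | Out2.

Definition outcome_of (s : seq cell) : outcome :=
  match mover_wins true s, mover_wins false s with
  | true, false => OutV
  | false, true => OutH
  | true, true => Out1
  | false, false => Out2
  end.

(* Main.v *)
Require Import Defs.
From mathcomp Require Import all_boot.
From mathcomp Require Import zify.
Set Implicit Arguments. Unset Strict Implicit. Unset Printing Implicit Defensive.

Notation W := mover_wins.

Lemma W_nil v : W v [::] = false. Proof. by []. Qed.

Lemma size_play v x s : x \in s -> size (play v x s) < size s.
Proof.
move=> xs; rewrite /play size_filter.
set a := (fun z => (z != x) && (z != partner v x)).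
have h: 0 < count (predC a) s.
  by rewrite -has_count; apply/hasP; exists x => //=; rewrite /a eqxx.
by rewrite -(count_predC a s) -{1}[count a s]addn0 ltn_add2l.
Qed.

Lemma size_play_le v x s n : x \in s -> size s <= n.+1 -> size (play v x s) <= n.
Proof. by move=> xs h; rewrite -ltnS; exact: leq_trans (size_play v xs) h. Qed.

Lemma wins_stable : forall k1 k2 v s, size s <= k1 -> size s <= k2 ->
  wins k1 v s = wins k2 v s.
Proof.
elim=> [|k1 IH] [|k2] v s //=.
- by rewrite leqn0 => /nilP ->.
- by move=> _; rewrite leqn0 => /nilP ->.
move=> H1 H2; apply: eq_in_has => x xs /=; congr (_ && ~~ _).
by apply: IH; apply: size_play_le.
Qed.

Lemma W_rec v s : W v s =
  has (fun x => (partner v x \in s) && ~~ W (~~ v) (play v x s)) s.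
Proof.
rewrite /mover_wins; case E: (size s) => [|k].
  by move/eqP: E; rewrite size_eq0 => /eqP ->.
rewrite /=; apply: eq_in_has => x xs /=; congr (_ && ~~ _).
apply: wins_stable => //; apply: size_play_le => //; by rewrite E.
Qed.

Lemma W_mem : forall n v s t, size s <= n -> size t <= n -> s =i t ->
  W v s = W v t.
Proof.
elim=> [|n IH] v s t Hs Ht st.
  by move: Hs Ht; rewrite !leqn0 => /nilP -> /nilP ->.
rewrite (W_rec v s) (W_rec v t) (eq_has_r st); apply: eq_in_has => x xt /=.
rewrite st; congr (_ && ~~ _); apply: IH.
- by apply: size_play_le => //; rewrite st.
- exact: size_play_le.
- by move=> z; rewrite !mem_filter st.
Qed.

Lemma W_eqi v s t : s =i t -> W v s = W v t.
Proof. by apply: (@W_mem (size s + size t)); lia. Qed.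

Lemma play_map (f : cell -> cell) v v' x s : injective f ->
  f (partner v x) = partner v' (f x) ->
  play v' (f x) (map f s) = map f (play v x s).
Proof.
move=> fi H; rewrite /play filter_map; congr map; apply: eq_filter => z /=.
by rewrite -H !(inj_eq fi).
Qed.

Lemma W_map (f : cell -> cell) (g : bool -> bool) : injective f ->
  (forall v, g (~~ v) = ~~ g v) ->
  (forall v x, f (partner v x) = partner (g v) (f x)) ->
  forall v s, W (g v) (map f s) = W v s.
Proof.
move=> fi Hg Hp v s.
suff H : forall n s v, size s <= n -> W (g v) (map f s) = W v s by apply: (H (size s)).
elim=> [|n IH] {}s {}v Hs.
  by move: Hs; rewrite leqn0 => /nilP ->.
rewrite W_rec (W_rec v s) has_map; apply: eq_in_has => x xs /=.
rewrite -Hp (mem_map fi) (play_map _ fi (Hp v x)) -Hg IH //.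
exact: size_play_le.
Qed.

Lemma mono (f : cell -> cell) b : injective f ->
  (forall x, f (partner b x) = partner b (f x)) ->
  (forall x y, partner (~~ b) (f x) = f y -> y = partner (~~ b) x) ->
  forall s, (W b s -> W b (map f s)) /\ (W (~~ b) (map f s) -> W (~~ b) s).
Proof.
move=> fi Hb Hr s.
suff H : forall n s, size s <= n ->
  (W b s -> W b (map f s)) /\ (W (~~ b) (map f s) -> W (~~ b) s).
  by apply: (H (size s)).
elim=> [|n IH] {}s Hs.
  by move: Hs; rewrite leqn0 => /nilP ->.
split.
- rewrite W_rec => /hasP [x xs /andP [px nw]].
  rewrite W_rec; apply/hasP; exists (f x); first exact: map_f.
  rewrite -Hb (mem_map fi) px /= (play_map _ fi (Hb x)).
  have [_ H2] := IH (play b x s) (leq_trans (size_play b xs) Hs).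
  by apply: contra nw; exact: H2.
- rewrite W_rec => /hasP [y /mapP [x xs ->] /andP [py nw]].
  move: py => /mapP [z zs Ez].
  have Hz := Hr _ _ Ez; subst z.
  rewrite W_rec; apply/hasP; exists x => //; rewrite zs /=.
  rewrite (play_map _ fi (esym Ez)) in nw.
  have [H1 _] := IH (play (~~ b) x s) (leq_trans (size_play (~~ b) xs) Hs).
  by rewrite negbK in nw *; apply: contra nw; exact: H1.
Qed.

Definition sep (A B : seq cell) := forall (a b : cell) v, a \in A -> b \in B ->
  [/\ a <> b, a <> partner v b & b <> partner v a].

Lemma play_id v x S : x \notin S -> partner v x \notin S -> play v x S = S.
Proof.
move=> h1 h2; apply/all_filterP/allP => z zS /=; apply/andP; split;
  apply/eqP => E; [move: h1 | move: h2]; by rewrite -E zS.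
Qed.

Lemma play_cat v x A B : play v x (A ++ B) = play v x A ++ play v x B.
Proof. by rewrite /play filter_cat. Qed.

Lemma sep_sym A B : sep A B -> sep B A.
Proof.
move=> H a b v aB bA; have [h1 h2 h3] := H b a v bA aB; split => //.
by move=> E; apply: h1.
Qed.

Lemma sep_sub A A' B : {subset A' <= A} -> sep A B -> sep A' B.
Proof. by move=> sub H a b v aA bB; apply: H => //; apply: sub. Qed.

Lemma play_sub v x A : {subset play v x A <= A}.
Proof. by move=> z; rewrite mem_filter => /andP [_ ->]. Qed.

Lemma sep_notin A B v x : sep A B -> x \in A -> (x \notin B) && (partner v x \notin B).
Proof.
move=> H xA; apply/andP; split; apply/negP => xB.
- by have [] := H x x v xA xB.
- by have [] := H x (partner v x) v xA xB.
Qed.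

Lemma sep_part A B v x : sep A B -> x \in A -> partner v x \in A ++ B -> partner v x \in A.
Proof.
move=> H xA; rewrite mem_cat => /orP [] // pB.
by have [] := H x (partner v x) v xA pB.
Qed.

Lemma sz_h1 a a' b n : a' < a -> a + b <= n.+1 -> a' + b <= n.
Proof. lia. Qed.
Lemma sz_h2 a b b' n : b' < b -> a + b <= n.+1 -> b' + a <= n.
Proof. lia. Qed.

Lemma sum P : forall A B, sep A B ->
  (W P A -> ~~ W (~~ P) B -> W P (A ++ B)) /\
  (~~ W (~~ P) A -> ~~ W (~~ P) B -> ~~ W (~~ P) (A ++ B)).
Proof.
move=> A B.
suff H : forall n A B, size A + size B <= n -> sep A B ->
  (W P A -> ~~ W (~~ P) B -> W P (A ++ B)) /\
  (~~ W (~~ P) A -> ~~ W (~~ P) B -> ~~ W (~~ P) (A ++ B)).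
  by apply: (H (size A + size B)).
elim=> [|n IH] {}A {}B Hs sAB.
  have: size A = 0 /\ size B = 0 by lia.
  by case=> /eqP; rewrite size_eq0 => /eqP -> /eqP; rewrite size_eq0 => /eqP ->.
split.
- rewrite W_rec => /hasP [x xA /andP [px nw]] nB.
  rewrite W_rec; apply/hasP; exists x; first by rewrite mem_cat xA.
  rewrite mem_cat px /= play_cat.
  have /andP [h1 h2] := sep_notin P sAB xA.
  rewrite (play_id h1 h2).
  have sz := size_play P xA.
  have [_ H2] := IH (play P x A) B (sz_h1 sz Hs) (sep_sub (@play_sub _ _ _) sAB).
  exact: H2.
- move=> nA nB; rewrite W_rec; apply/hasP => [[y yAB /andP [py nw]]].
  rewrite negbK in nw.
  move: (yAB); rewrite mem_cat => /orP [yA | yB].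
  + have pyA := sep_part sAB yA py.
    have /andP [h1 h2] := sep_notin (~~ P) sAB yA.
    rewrite play_cat (play_id h1 h2) in nw.
    have hw : W P (play (~~ P) y A).
      apply: negbNE; apply: contra nA => h; rewrite W_rec; apply/hasP; exists y => //.
      by rewrite pyA negbK h.
    have sz := size_play (~~ P) yA.
    have [H1 _] := IH (play (~~ P) y A) B (sz_h1 sz Hs) (sep_sub (@play_sub _ _ _) sAB).
    by move: (H1 hw nB); rewrite (negbTE nw).
  + have sBA := sep_sym sAB.
    have pyB : partner (~~ P) y \in B.
      by apply: (sep_part sBA yB); move: py; rewrite !mem_cat orbC.
    have /andP [h1 h2] := sep_notin (~~ P) sBA yB.
    rewrite play_cat (play_id h1 h2) in nw.
    have hw : W P (play (~~ P) y B).
      apply: negbNE; apply: contra nB => h; rewrite W_rec; apply/hasP; exists y => //.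
      by rewrite pyB negbK h.
    have sz := size_play (~~ P) yB.
    have [H1 _] := IH (play (~~ P) y B) A (sz_h2 sz Hs) (sep_sub (@play_sub _ _ _) sBA).
    move: (H1 hw nA); rewrite (W_eqi _ (t := A ++ play (~~ P) y B)) ?(negbTE nw) //.
    by move=> z; rewrite !mem_cat orbC.
Qed.

Ltac nlia := try (change (Equality.sort Datatypes_nat__canonical__eqtype_Equality) with nat in * ); lia.

Definition shc k (x : cell) : cell := (x.1, x.2 + k).
Definition shr k (x : cell) : cell := (x.1 + k, x.2).
Definition tr (x : cell) : cell := (x.2, x.1).
Definition fc n (x : cell) : cell := (x.1, if x.2 < n then x.2 else x.2.+1).
Definition fr a (x : cell) : cell := (if x.1 < a then x.1 else x.1.+1, x.2).
Definition sig k (x : cell) : cell := (x.2, x.1 + k).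

Lemma part_bounds v (x : cell) : x.1 <= (partner v x).1 <= x.1.+1 /\ x.2 <= (partner v x).2 <= x.2.+1.
Proof. case: v; rewrite /partner /=; nlia. Qed.

Lemma sep_col (A B : seq cell) k : (forall x : cell, x \in A -> x.2 < k) -> (forall z : cell, z \in B -> k < z.2) -> sep A B.
Proof.
move=> hA hB a b v aA bB; have ha := hA a aA; have hb := hB b bB.
have [_ /andP [pa1 pa2]] := part_bounds v a; have [_ /andP [pb1 pb2]] := part_bounds v b.
split => /(congr1 snd) E /=.

all: nlia.
Qed.

Lemma sep_row (A B : seq cell) k : (forall x : cell, x \in A -> x.1 < k) -> (forall z : cell, z \in B -> k < z.1) -> sep A B.
Proof.
move=> hA hB a b v aA bB; have ha := hA a aA; have hb := hB b bB.
have [/andP [pa1 pa2] _] := part_bounds v a; have [/andP [pb1 pb2] _] := part_bounds v b.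
by split => /(congr1 fst) E; nlia.
Qed.

Lemma sig_inj k : injective (sig k).
Proof. move=> [r c] [r' c'] /= [-> E]; congr pair; nlia. Qed.
Lemma sig_pt k x : sig k (partner true x) = partner false (sig k x).
Proof. case: x => r c /=; congr pair; nlia. Qed.
Lemma sig_pf k x : sig k (partner false x) = partner true (sig k x).
Proof. by case: x. Qed.

Lemma mirror k : forall T : seq cell, (forall x, x \in T -> x.2 < k) ->
  ~~ W true (T ++ map (sig k) T).
Proof.
move=> T0.
suff H : forall n T, size T <= n -> (forall x, x \in T -> x.2 < k) ->
  ~~ W true (T ++ map (sig k) T) by apply: (H (size T0)).
elim=> [|n IH] T Hs HT.
  by move: Hs; rewrite leqn0 => /nilP ->.
have hsig : forall z, z \in map (sig k) T -> k <= z.2.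
  by move=> z /mapP [y _ ->]; rewrite /= leq_addl.
apply/negP; rewrite W_rec => /hasP [x xTT /andP [px nw]].
move: xTT; rewrite mem_cat => /orP [xT | /mapP [y yT Ey]].
- have xk := HT x xT.
  have pT : partner true x \in T.
    move: px; rewrite mem_cat => /orP [] // /hsig /=; nlia.
  have h1 : x \notin map (sig k) T by apply/negP => /hsig; nlia.
  have h2 : partner true x \notin map (sig k) T by apply/negP => /hsig /=; nlia.
  rewrite play_cat (play_id h1 h2) in nw.
  move/negP: nw; apply.
  rewrite W_rec; apply/hasP; exists (sig k x); first by rewrite mem_cat map_f ?orbT.
  rewrite -sig_pt mem_cat map_f ?orbT //=.
  have g1 : sig k x \notin play true x T.
    by apply/negP => /play_sub /HT /=; nlia.
  have g2 : partner false (sig k x) \notin play true x T.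
    by apply/negP => /play_sub /HT /=; nlia.
  rewrite play_cat (play_id g1 g2) (play_map T (@sig_inj k) (sig_pt k x)).
  apply: IH; first exact: size_play_le.
  by move=> z /play_sub /HT.
- subst x.
  have yk := HT y yT.
  have pT : partner false y \in T.
    move: px; rewrite -sig_pf mem_cat => /orP [/HT /= | /mapP [z zT /sig_inj ->]] //; nlia.
  have pk := HT _ pT.
  have h1 : sig k y \notin T by apply/negP => /HT /=; nlia.
  have h2 : partner true (sig k y) \notin T by apply/negP => /HT /=; nlia.
  rewrite play_cat (play_id h1 h2) in nw.
  rewrite (play_map T (@sig_inj k) (sig_pf k y)) in nw.
  move/negP: nw; apply.
  rewrite W_rec; apply/hasP; exists y; first by rewrite mem_cat yT.
  rewrite mem_cat pT /=.
  have g1 : y \notin map (sig k) (play false y T).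
    by apply/negP => /mapP [z _ Ez]; move: yk; rewrite Ez /=; nlia.
  have g2 : partner false y \notin map (sig k) (play false y T).
    by apply/negP => /mapP [z _ Ez]; move: pk; rewrite Ez /=; nlia.
  rewrite play_cat (play_id g1 g2).
  apply: IH; first exact: size_play_le.
  by move=> z /play_sub /HT.
Qed.

Lemma mem_board (x : cell) m n : (x \in board m n) = (x.1 < m) && (x.2 < n).
Proof.
case: x => r c; rewrite /board; apply/idP/andP.
- move=> /allpairsP [[r' c'] [/= hr hc [-> ->]]].
  by move: hr hc; rewrite !mem_iota /= !add0n.
- case=> hr hc; apply/allpairsP; exists (r, c) => /=.
  by rewrite !mem_iota /= !add0n hr hc.
Qed.

Lemma shc_inj k : injective (shc k).
Proof. move=> [r c] [r' c'] /= [-> E]; congr pair; nlia. Qed.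
Lemma shc_p k v x : shc k (partner v x) = partner (id v) (shc k x).
Proof. by case: v; case: x => r c //=; rewrite /shc /= addSn. Qed.
Lemma shr_inj k : injective (shr k).
Proof. move=> [r c] [r' c'] /= [E ->]; congr pair; nlia. Qed.
Lemma shr_p k v x : shr k (partner v x) = partner (id v) (shr k x).
Proof. by case: v; case: x => r c //=; rewrite /shr /= addSn. Qed.
Lemma tr_inj : injective tr.
Proof. by move=> [r c] [r' c'] /= [-> ->]. Qed.
Lemma tr_p v x : tr (partner v x) = partner (~~ v) (tr x).
Proof. by case: v; case: x. Qed.

Lemma W_shc k v s : W v (map (shc k) s) = W v s.
Proof. exact: (W_map (g := id) (@shc_inj k) (fun _ => erefl) (@shc_p k)). Qed.
Lemma W_shr k v s : W v (map (shr k) s) = W v s.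
Proof. exact: (W_map (g := id) (@shr_inj k) (fun _ => erefl) (@shr_p k)). Qed.
Lemma W_tr v s : W (~~ v) (map tr s) = W v s.
Proof. exact: (W_map (g := negb) tr_inj (fun _ => erefl) tr_p). Qed.

Lemma fc_inj n : injective (fc n).
Proof. move=> [r c] [r' c'] /=; rewrite /fc /=; case: ifP; case: ifP => h1 h2 [-> E]; congr pair; nlia. Qed.
Lemma fc_pb n x : fc n (partner true x) = partner true (fc n x).
Proof. by case: x. Qed.
Lemma fc_pr n x y : partner (~~ true) (fc n x) = fc n y -> y = partner (~~ true) x.
Proof.
case: x => r c; case: y => r' c'; rewrite /fc /=.
by case: ifP; case: ifP => h1 h2 [-> E]; congr pair; nlia.
Qed.

Lemma fr_inj a : injective (fr a).
Proof. move=> [r c] [r' c'] /=; rewrite /fr /=; case: ifP; case: ifP => h1 h2 [E ->]; congr pair; nlia. Qed.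
Lemma fr_pb a x : fr a (partner false x) = partner false (fr a x).
Proof. by case: x. Qed.
Lemma fr_pr a x y : partner (~~ false) (fr a x) = fr a y -> y = partner (~~ false) x.
Proof.
case: x => r c; case: y => r' c'; rewrite /fr /=.
by case: ifP; case: ifP => h1 h2 [E ->]; congr pair; nlia.
Qed.

Lemma E1 a n k : map (fc n) (board a (n + k)) =i board a n ++ map (shc n.+1) (board a k).
Proof.
move=> [r c]; rewrite mem_cat; apply/idP/idP.
- move=> /mapP [[r' c'] H]; rewrite /fc /= => -[-> ->]; rewrite mem_board /= in H.
  case: ltnP => h.
  + by rewrite mem_board /=; apply/orP; left; nlia.
  + apply/orP; right; apply/mapP; exists (r', c' - n); first by rewrite mem_board /=; nlia.
    rewrite /shc /=; congr pair; nlia.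
- case/orP => [H | /mapP [[r' c'] H]].
  + rewrite mem_board /= in H; apply/mapP; exists (r, c); first by rewrite mem_board /=; nlia.
    by rewrite /fc /=; case: ltnP => h //; exfalso; nlia.
  + rewrite /shc /= => -[-> ->]; rewrite mem_board /= in H.
    apply/mapP; exists (r', c' + n); first by rewrite mem_board /=; nlia.
    by rewrite /fc /=; case: ltnP => h; congr pair; nlia.
Qed.

Lemma E2 a b n : map (fr a) (board (a + b) n) =i board a n ++ map (shr a.+1) (board b n).
Proof.
move=> [r c]; rewrite mem_cat; apply/idP/idP.
- move=> /mapP [[r' c'] H]; rewrite /fr /= => -[-> ->]; rewrite mem_board /= in H.
  case: ltnP => h.
  + by rewrite mem_board /=; apply/orP; left; nlia.
  + apply/orP; right; apply/mapP; exists (r' - a, c'); first by rewrite mem_board /=; nlia.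
    rewrite /shr /=; congr pair; nlia.
- case/orP => [H | /mapP [[r' c'] H]].
  + rewrite mem_board /= in H; apply/mapP; exists (r, c); first by rewrite mem_board /=; nlia.
    by rewrite /fr /=; case: ltnP => h //; exfalso; nlia.
  + rewrite /shr /= => -[-> ->]; rewrite mem_board /= in H.
    apply/mapP; exists (r' + a, c'); first by rewrite mem_board /=; nlia.
    by rewrite /fr /=; case: ltnP => h; congr pair; nlia.
Qed.

Lemma E3 a n : map tr (board a n) =i board n a.
Proof.
move=> [r c]; apply/idP/idP.
- move=> /mapP [[r' c'] H]; rewrite /tr /= => -[-> ->]; rewrite mem_board /= in H; rewrite mem_board /=; nlia.
- move=> H; apply/mapP; exists (c, r) => //; rewrite mem_board /= in H; rewrite mem_board /=; nlia.
Qed.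

Lemma E4 a : board a (a + a) =i board a a ++ map (sig a) (board a a).
Proof.
move=> [r c]; rewrite mem_cat; apply/idP/idP.
- rewrite mem_board /= => H; case: (ltnP c a) => h.
  + by rewrite mem_board /=; apply/orP; left; nlia.
  + apply/orP; right; apply/mapP; exists (c - a, r); first by rewrite mem_board /=; nlia.
    rewrite /sig /=; congr pair; nlia.
- case/orP => [H | /mapP [[r' c'] H]].
  + rewrite mem_board /= in H; rewrite mem_board /=; nlia.
  + rewrite /sig /= => -[-> ->]; rewrite mem_board /= in H; rewrite mem_board /=; nlia.
Qed.

Definition SV a n := W true (board a n) && ~~ W false (board a n).
Definition Sinf a := forall N, exists n, N < n /\ SV a n.

Lemma stepD a n : SV a (n + (a + a)) -> SV a n.
Proof.
case/andP => wV nH.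
set s := board a (n + (a + a)).
set X := board a n. set Z := map (shc n.+1) (board a (a + a)).
have sXZ : sep X Z.
  apply: (@sep_col _ _ n) => [x | z]; first by rewrite mem_board => /andP [].
  move=> /mapP [y _ ->]; rewrite /shc /=; nlia.
have nZ : ~~ W true Z.
  rewrite /Z W_shc (W_eqi _ (E4 a)); apply: mirror => x.
  by rewrite mem_board => /andP [].
have Hmap : map (fc n) s =i X ++ Z := E1 a n (a + a).
have [M1 M2] := mono (@fc_inj n) (@fc_pb n) (@fc_pr n) s.
have [S1 S2] := sum false sXZ.
apply/andP; split.
- apply/negPn; apply/negP => nX.
  have := S2 nX nZ; rewrite /= -(W_eqi _ Hmap).
  by rewrite (M1 wV).
- apply/negP => hX; move: (S1 hX nZ); rewrite -(W_eqi _ Hmap) => /M2.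
  by rewrite (negbTE nH).
Qed.

Lemma rowsum a b n : SV a n -> SV b n -> SV (a + b) n.
Proof.
move=> /andP [aV aH] /andP [bV bH].
set s := board (a + b) n.
set X := board a n. set Y := map (shr a.+1) (board b n).
have sXY : sep X Y.
  apply: (@sep_row _ _ a) => [x | z]; first by rewrite mem_board => /andP [].
  move=> /mapP [y _ ->]; rewrite /shr /=; nlia.
have Hmap : map (fr a) s =i X ++ Y := E2 a b n.
have [M1 M2] := mono (@fr_inj a) (@fr_pb a) (@fr_pr a) s.
have [S1 S2] := sum true sXY.
have yH : ~~ W false Y by rewrite /Y W_shr.
apply/andP; split.
- apply: M2; rewrite /= (W_eqi _ Hmap); exact: S1 aV yH.
- apply/negP => /M1; rewrite (W_eqi _ Hmap); apply/negP; exact: S2 aH yH.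
Qed.

Lemma rowmult a n k : SV a n -> SV (a * k.+1) n.
Proof.
move=> h; elim: k => [|k IH]; first by rewrite muln1.
by rewrite mulnS addnC; apply: rowsum.
Qed.

Lemma transp a n : SV a n -> W false (board n a) && ~~ W true (board n a).
Proof.
have Ht : forall v, W (~~ v) (board n a) = W v (board a n).
  by move=> v; rewrite -(W_eqi _ (E3 a n)) W_tr.
have := Ht true; have := Ht false; rewrite /= => -> ->.
by [].
Qed.

Lemma no_both x y : SV x y -> SV y x -> False.
Proof.
move=> h1 /transp /andP [h3 _]; case/andP: h1 => _.
by rewrite h3.
Qed.

Lemma square a k : SV a (a * k.+1) -> False.
Proof. move=> h; exact: no_both (rowmult k h) (rowmult k h). Qed.

Lemma stepD_iter a n t : SV a (n + (a + a) * t) -> SV a n.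
Proof.
elim: t => [|t IH] h; first by rewrite muln0 addn0 in h.
apply: IH; apply: stepD.
have -> : n + (a + a) * t + (a + a) = n + (a + a) * t.+1 by rewrite mulnS; nlia.
exact: h.
Qed.

Lemma get_mult a b : 1 < b -> coprime (a + a) b -> Sinf a ->
  exists k, SV a (b * k.+1).
Proof.
move=> b1 cop H.
have [u _ hu] := Bezoutr (a + a) (ltnW b1).
rewrite (eqP cop) in hu.
have [N [hN sN]] := H ((a + a) * b).
pose t := (u * N) %% b.
have tb : t < b by rewrite ltn_mod; nlia.
have hdiv : b %| N + (a + a) * t.
  rewrite /dvdn -modnDmr modnMmr modnDmr.
  have -> : N + (a + a) * (u * N) = N * (1 + u * (a + a)) by nia.
  by rewrite -/(dvdn _ _) dvdn_mull.
pose n := N - (a + a) * (b - t).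
have Hle1 : (a + a) * (b - t) <= (a + a) * b by apply: leq_mul => //; apply: leq_subr.
have Hle2 : (a + a) * t <= (a + a) * b by apply: leq_mul => //; apply: ltnW.
have HN : n + (a + a) * (b - t) = N by rewrite subnK //; nlia.
have hn : b %| n.
  have -> : n = N + (a + a) * t - (a + a) * b by rewrite /n mulnBr; nlia.
  by apply: dvdn_sub => //; exact: dvdn_mull (dvdnn b).
have n0 : 0 < n by rewrite /n; nlia.
have bn : b <= n by apply: dvdn_leq.
exists (n %/ b).-1; rewrite prednK ?divn_gt0 //; last by nlia.
rewrite mulnC divnK //.
by apply: (@stepD_iter _ _ (b - t)); rewrite HN.
Qed.

Lemma outV s : outcome_of s = OutV -> W true s && ~~ W false s.
Proof. by rewrite /outcome_of; case: (mover_wins true s); case: (mover_wins false s). Qed.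

Lemma odd_case p q : prime p -> prime q -> odd p -> odd q -> p != q ->
  Sinf p -> Sinf q -> False.
Proof.
move=> pp pq op oq npq Sp Sq.
have cq : coprime (p + p) q.
  by rewrite addnn -mul2n coprimeMl coprime2n oq /= prime_coprime // dvdn_prime2.
have cp : coprime (q + q) p.
  by rewrite addnn -mul2n coprimeMl coprime2n op /= prime_coprime // dvdn_prime2 // eq_sym.
have [k hk] := get_mult (prime_gt1 pq) cq Sp.
have [j hj] := get_mult (prime_gt1 pp) cp Sq.
exact: no_both (rowmult j hk) (rowmult k hj).
Qed.

Lemma common_final q y : SV 2 y -> SV q y -> odd y -> q < y -> odd q -> False.
Proof.
move=> h2 hq oy qy oq.
have y2 : y %% 2 = 1 by rewrite modn2 oy.
have q2 : q %% 2 = 1 by rewrite modn2 oq.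
pose j := (y - q) %/ 2 - 1.
have E : q + 2 * j.+1 = y by rewrite /j; nlia.
have hh : SV y y by rewrite -{1}E; exact: rowsum hq (rowmult j h2).
exact (no_both hh hh).
Qed.

Lemma two_case q : prime q -> odd q -> Sinf 2 -> Sinf q -> False.
Proof.
move=> pq oq S2 Sq.
have c4 : coprime (2 + 2) q by rewrite (_ : 2 + 2 = 2 * 2) // coprimeMl coprime2n oq.
have [k hk] := get_mult (prime_gt1 pq) c4 S2.
have q2 : q %% 2 = 1 by rewrite modn2 oq.
have q1 := prime_gt1 pq.
have [M [hM sM]] := Sq (3 * q).
case: (boolP (odd M)) => oM; last first.
  have M2 : M %% 2 = 0 by rewrite modn2 (negbTE oM).
  have E : 2 * (M %/ 2 - 1).+1 = M by nlia.
  have := rowmult (M %/ 2 - 1) hk; rewrite E => h1.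
  exact: no_both h1 (rowmult k sM).
have M2 : M %% 2 = 1 by rewrite modn2 oM.
have [N [hN sN]] := S2 M.
case: (boolP (odd N)) => oN; last first.
  have N2 : N %% 2 = 0 by rewrite modn2 (negbTE oN).
  apply: (@square 2 (N %/ 2 - 1)).
  have -> : 2 * (N %/ 2 - 1).+1 = N by nlia.
  exact: sN.
have N2 : N %% 2 = 1 by rewrite modn2 oN.
case: (boolP (M %% 4 == N %% 4)) => /eqP hc.
- have h2 : SV 2 M.
    apply: (@stepD_iter _ _ ((N - M) %/ 4)).
    have -> : M + (2 + 2) * ((N - M) %/ 4) = N by nlia.
    exact: sN.
  apply: (common_final h2 sM oM); nlia.
- pose y := M - 2 * q.
  have hq : SV q y.
    apply: (@stepD_iter _ _ 1).
    have -> : y + (q + q) * 1 = M by rewrite /y; nlia.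
    exact: sM.
  have h2 : SV 2 y.
    apply: (@stepD_iter _ _ ((N - y) %/ 4)).
    have -> : y + (2 + 2) * ((N - y) %/ 4) = N by rewrite /y; nlia.
    exact: sN.
  have oy : odd y.
    have : y %% 2 = 1 by rewrite /y; nlia.
    by rewrite modn2; case: (odd y).
  apply: (common_final h2 hq oy); rewrite /y; nlia.
Qed.

Theorem corollary3p7 :
  forall p q : nat, prime p -> prime q ->
    (forall N, exists n, N < n /\ outcome_of (board p n) = OutV) ->
    (forall N, exists n, N < n /\ outcome_of (board q n) = OutV) ->
    p = q.
Proof.
move=> p q pp pq Hp Hq.
have Sp : Sinf p by move=> N; have [n [h1 h2]] := Hp N; exists n; split => //; exact: outV.
have Sq : Sinf q by move=> N; have [n [h1 h2]] := Hq N; exists n; split => //; exact: outV.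
case: (eqVneq p q) => // npq; exfalso.
case: (even_prime pp) => [p2 | op]; case: (even_prime pq) => [q2 | oq].
- by rewrite p2 q2 in npq.
- by subst p; exact: (two_case pq oq Sp Sq).
- by subst q; exact: (two_case pp op Sq Sp).
- exact: (odd_case pp pq op oq npq Sp Sq).
Qed.
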